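(* Suppose Assumptions A and B hold and let $(\hat x,\hat t)\in\mathcal D_{\mathrm{SDP}}$. If $\mathcal F(\hat x)$ is a definite face of $\Gamma$, then $(\hat x,\hat t)\in\mathcal D$.
   Context: Fix integers $N\ge 1$, $m_I,m_E\ge 0$, $m:=m_I+m_E\ge 1$; $[a,b]=\{a,\dots,b\}$, $[n]=[1,n]$. For $i\in[0,m]$ let $q_i(x)=x^\top A_ix+2b_i^\top x+c_i$ with $A_i\in\mathbb S^N$, $b_i\in\mathbb R^N$, $c_i\in\mathbb R$. The epigraph of the QCQP is $\mathcal D:=\{(x,t)\in\mathbb R^N\times\mathbb R: q_0(x)\le 2t,\ q_i(x)\le0\ \forall i\in[m_I],\ q_i(x)=0\ \forall i\in[m_I+1,m]\}$. Let $Q_i=\begin{pmatrix}c_i& b_i^\top\\ b_i& A_i\end{pmatrix}$ and $\mathcal D_{\mathrm{SDP}}:=\{(x,t):\exists X\in\mathbb S^N$ with $Y=\begin{pmatrix}1&x^\top\\ x& X\end{pmatrix}\succeq0$, $\langle Q_0,Y\rangle\le 2t$, $\langle Q_i,Y\rangle\le 0\ \forall i\in[m_I]$, $\langle Q_i,Y\rangle= 0\ \forall i\in[m_I+1,m]\}$ (trace inner product). For $\gamma\in\mathbb R^m$, $A(\gamma)=A_0+\sum_{i=1}^m\gamma_iA_i$, $q(\gamma,x)=q_0(x)+\sum_{i=1}^m\gamma_iq_i(x)$, and $\Gamma:=\{\gamma\in\mathbb R^m: A(\gamma)\succeq 0,\ \gamma_i\ge 0\ \forall i\in[m_I]\}$.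 Assumption A: the QCQP feasible set $\{x: q_i(x)\le 0\ \forall i\in[m_I],\ q_i(x)=0\ \forall i\in[m_I+1,m]\}$ is nonempty and there is $\gamma^*$ with $\gamma^*_i\ge0$ for $i\in[m_I]$ and $A(\gamma^* )\succ 0$. Assumption B: for every $\hat x\in\mathbb R^N$, if $\sup_{\gamma\in\Gamma}q(\gamma,\hat x)$ is finite then it is attained on $\Gamma$. For such $\hat x$, $\mathcal F(\hat x):=\arg\max_{\gamma\in\Gamma}q(\gamma,\hat x)$, a nonempty face of $\Gamma$ (for $(\hat x,\hat t)\in\mathcal D_{\mathrm{SDP}}$ the supremum is finite). A nonempty face $\mathcal F$ of $\Gamma$ is definite if some $\gamma\in\mathcal F$ has $A(\gamma)\succ0$, and semidefinite otherwise. *)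

(* Defs.v *)
(* the QCQP data live over an arbitrary real closed field R
   (the paper's case is R = the real numbers). *)
From HB Require Import structures.
From mathcomp Require Import all_boot all_order all_algebra.
Set Implicit Arguments. Unset Strict Implicit. Unset Printing Implicit Defensive.
Import Order.TTheory GRing.Theory Num.Theory.
Local Open Scope ring_scope.

Section QCQP.
Variable R : rcfType.

Definition symmx n (M : 'M[R]_n) : Prop := M^T = M.

Definition psdmx n (M : 'M[R]_n) : Prop :=
  symmx M /\ forall v : 'cV[R]_n, 0 <= (v^T *m M *m v) 0 0.
Definition pdmx n (M : 'M[R]_n) : Prop :=
  symmx M /\ forall v : 'cV[R]_n, v != 0 -> 0 < (v^T *m M *m v) 0 0.

(* trace inner product <P,Y> = tr(P^T Y) *)
Definition tip n (P Y : 'M[R]_n) : R := \sum_(i < n) \sum_(j < n) P i j * Y i j.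

Definition qf N (A : 'M[R]_N) (b : 'cV[R]_N) (c : R) (x : 'cV[R]_N) : R :=
  (x^T *m A *m x) 0 0 + 2 * (b^T *m x) 0 0 + c.

Definition Qmx N (A : 'M[R]_N) (b : 'cV[R]_N) (c : R) : 'M[R]_(1 + N) :=
  block_mx c%:M b^T b A.
Definition Ymx N (x : 'cV[R]_N) (X : 'M[R]_N) : 'M[R]_(1 + N) :=
  block_mx 1%:M x^T x X.

Variables (N mI mE : nat).
Variables (A0 : 'M[R]_N) (b0 : 'cV[R]_N) (c0 : R).
Variables (A : 'I_(mI + mE) -> 'M[R]_N) (b : 'I_(mI + mE) -> 'cV[R]_N)
          (c : 'I_(mI + mE) -> R).

(* constraint i is an inequality iff i < mI (i.e. i+1 in [1,mI] in the paper) *)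
Definition qcqp_feasible (x : 'cV[R]_N) : Prop :=
  forall i : 'I_(mI + mE),
    if (i < mI)%N then qf (A i) (b i) (c i) x <= 0 else qf (A i) (b i) (c i) x == 0.

Definition inD (x : 'cV[R]_N) (t : R) : Prop :=
  qf A0 b0 c0 x <= 2 * t /\ qcqp_feasible x.

Definition inDSDP (x : 'cV[R]_N) (t : R) : Prop :=
  exists X : 'M[R]_N, symmx X /\
    let Y := Ymx x X in
    psdmx Y /\ tip (Qmx A0 b0 c0) Y <= 2 * t /\
    forall i : 'I_(mI + mE),
      if (i < mI)%N then tip (Qmx (A i) (b i) (c i)) Y <= 0
      else tip (Qmx (A i) (b i) (c i)) Y == 0.

Definition Agam (g : 'I_(mI + mE) -> R) : 'M[R]_N :=
  A0 + \sum_(i < mI + mE) g i *: A i.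
Definition qgam (g : 'I_(mI + mE) -> R) (x : 'cV[R]_N) : R :=
  qf A0 b0 c0 x + \sum_(i < mI + mE) g i * qf (A i) (b i) (c i) x.
Definition inGamma (g : 'I_(mI + mE) -> R) : Prop :=
  psdmx (Agam g) /\ forall i : 'I_(mI + mE), (i < mI)%N -> 0 <= g i.

Definition assumptionA : Prop :=
  (exists x, qcqp_feasible x) /\
  exists g, (forall i : 'I_(mI + mE), (i < mI)%N -> 0 <= g i) /\ pdmx (Agam g).

Definition assumptionB : Prop :=
  forall x : 'cV[R]_N,
    (exists M : R, forall g, inGamma g -> qgam g x <= M) ->
    exists2 g, inGamma g & forall g', inGamma g' -> qgam g' x <= qgam g x.

Definition inF (x : 'cV[R]_N) (g : 'I_(mI + mE) -> R) : Prop :=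
  inGamma g /\ forall g', inGamma g' -> qgam g' x <= qgam g x.

Definition definite_F (x : 'cV[R]_N) : Prop :=
  exists g, inF x g /\ pdmx (Agam g).

End QCQP.

(* Main.v *)
Require Import Defs.
From HB Require Import structures.
From mathcomp Require Import all_boot all_order all_algebra.
From mathcomp Require Import ring lra.
Import Order.TTheory GRing.Theory Num.Theory.
Local Open Scope ring_scope.
Set Implicit Arguments. Unset Strict Implicit.



Section Aux.
Variable R : rcfType.

Lemma quad_cs (a bb cc : R) : 0 <= cc ->
  (forall l, 0 <= a + 2 * bb * l + cc * l ^+ 2) -> bb ^+ 2 <= a * cc.
Proof.
move=> c0 H; have [cpos|] := ltrP 0 cc.
  have := H (- bb / cc).
  have -> : a + 2 * bb * (- bb / cc) + cc * (- bb / cc) ^+ 2 = (a * cc - bb ^+ 2) / cc.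
    by field; rewrite gt_eqF.
  by rewrite pmulr_lge0 ?invr_gt0 // subr_ge0.
move=> cle; have cz : cc = 0 by apply/eqP; rewrite eq_le cle c0.
subst cc; rewrite mulr0; case: (eqVneq bb 0) => [->|bn]; first by rewrite expr0n.
have := H (- (a + 1) / (2 * bb)).
have -> : a + 2 * bb * (- (a + 1) / (2 * bb)) + 0 * (- (a + 1) / (2 * bb)) ^+ 2 = -1.
  by field.
by rewrite ler0N1.
Qed.
End Aux.



Section Aux2.
Variable R : rcfType.
Definition bl n (M : 'M[R]_n) (u v : 'cV[R]_n) := (u^T *m M *m v) 0 0.

Lemma bl_sym n (M : 'M[R]_n) u v : symmx M -> bl M u v = bl M v u.
Proof.
move=> hM; rewrite /bl -[in LHS](trmxK (u^T *m M *m v)) mxE.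
by rewrite !trmx_mul trmxK hM mulmxA.
Qed.

Lemma blDl n (M : 'M[R]_n) u1 u2 v : bl M (u1 + u2) v = bl M u1 v + bl M u2 v.
Proof. by rewrite /bl raddfD /= !mulmxDl mxE. Qed.
Lemma blDr n (M : 'M[R]_n) u v1 v2 : bl M u (v1 + v2) = bl M u v1 + bl M u v2.
Proof. by rewrite /bl !mulmxDr mxE. Qed.
Lemma blZl n (M : 'M[R]_n) l u v : bl M (l *: u) v = l * bl M u v.
Proof. by rewrite /bl linearZ /= -!scalemxAl mxE. Qed.
Lemma blZr n (M : 'M[R]_n) l u v : bl M u (l *: v) = l * bl M u v.
Proof. by rewrite /bl -!scalemxAr mxE. Qed.

Lemma bl_quad n (M : 'M[R]_n) u v l : symmx M ->
  bl M (u + l *: v) (u + l *: v) = bl M u u + 2 * bl M u v * l + bl M v v * l ^+ 2.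
Proof.
move=> hM; rewrite !blDl !blDr !blZl !blZr (bl_sym v u hM); ring.
Qed.

Lemma bl_cs n (M : 'M[R]_n) u v : psdmx M ->
  bl M u v ^+ 2 <= bl M u u * bl M v v.
Proof.
move=> [hs hp]; apply: quad_cs; first exact: hp.
by move=> l; rewrite -bl_quad //; apply: hp.
Qed.
End Aux2.



Section Aux3.
Variable R : rcfType.

Lemma tipC n (P Z : 'M[R]_n) : tip P Z = tip Z P.
Proof. by apply: eq_bigr => i _; apply: eq_bigr => j _; rewrite mulrC. Qed.
Lemma tipDl n (P Q Z : 'M[R]_n) : tip (P + Q) Z = tip P Z + tip Q Z.
Proof.
rewrite /tip -big_split; apply: eq_bigr => i _; rewrite -big_split.
by apply: eq_bigr => j _; rewrite mxE mulrDl.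
Qed.
Lemma tipZl n k (P Z : 'M[R]_n) : tip (k *: P) Z = k * tip P Z.
Proof.
rewrite /tip mulr_sumr; apply: eq_bigr => i _; rewrite mulr_sumr.
by apply: eq_bigr => j _; rewrite mxE mulrA.
Qed.
Lemma tip0l n (Z : 'M[R]_n) : tip 0 Z = 0.
Proof. by rewrite /tip big1 // => i _; rewrite big1 // => j _; rewrite mxE mul0r. Qed.
Lemma tipDr n (P Q Z : 'M[R]_n) : tip Z (P + Q) = tip Z P + tip Z Q.
Proof. by rewrite !(tipC Z) tipDl. Qed.
Lemma tipZr n k (P Z : 'M[R]_n) : tip Z (k *: P) = k * tip Z P.
Proof. by rewrite !(tipC Z) tipZl. Qed.
Lemma tip_suml n I (r : seq I) (F : I -> 'M[R]_n) Z :
  tip (\sum_(i <- r) F i) Z = \sum_(i <- r) tip (F i) Z.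
Proof.
apply: (big_morph (fun P => tip P Z)); first by move=> ??; rewrite tipDl.
exact: tip0l.
Qed.

Lemma mx11E (M : 'M[R]_1) (i j : 'I_1) : M i j = M 0 0.
Proof. by rewrite !ord1. Qed.

Lemma bl_expand n (M : 'M[R]_n) u v :
  bl M u v = \sum_i \sum_j u i 0 * M i j * v j 0.
Proof.
rewrite /bl mxE; rewrite exchange_big /=; apply: eq_bigr => j _.
rewrite mxE mulr_suml; apply: eq_bigr => i _; by rewrite mxE.
Qed.

Lemma tip_rank1 n (P : 'M[R]_n) u : tip P (u *m u^T) = bl P u u.
Proof.
rewrite bl_expand /tip; apply: eq_bigr => i _; apply: eq_bigr => j _.
rewrite mxE big_ord1 !mxE; ring.
Qed.

Lemma bl_rank1 n (u w v v' : 'cV[R]_n) :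
  bl (u *m w^T) v v' = (v^T *m u) 0 0 * (w^T *m v') 0 0.
Proof.
rewrite /bl -!mulmxA (mulmxA v^T) [LHS]mxE big_ord1 //.
Qed.
End Aux3.



Section Aux4.
Variable R : rcfType.

Lemma blMD n (M1 M2 : 'M[R]_n) u v : bl (M1 + M2) u v = bl M1 u v + bl M2 u v.
Proof. by rewrite /bl mulmxDr mulmxDl mxE. Qed.
Lemma blMZ n k (M : 'M[R]_n) u v : bl (k *: M) u v = k * bl M u v.
Proof. by rewrite /bl -scalemxAr -scalemxAl mxE. Qed.

Lemma bl_delta n (M : 'M[R]_n) (i j : 'I_n) : bl M (delta_mx i 0) (delta_mx j 0) = M i j.
Proof.
rewrite bl_expand (bigD1 i) //= [X in _ + X]big1 => [|k /negPf kn]; last first.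
  by rewrite big1 // => l _; rewrite !mxE kn /= !mul0r.
rewrite addr0 (bigD1 j) //= [X in _ + X]big1 => [|l /negPf ln]; last first.
  by rewrite !mxE ln /= mulr0.
by rewrite !mxE !eqxx /=; ring.
Qed.

Lemma symmx_entry n (M : 'M[R]_n) i j : symmx M -> M j i = M i j.
Proof. by move=> h; rewrite -{1}h mxE. Qed.

Lemma psd_tip_gen n (P : 'M[R]_n) : psdmx P -> forall m (Z : 'M[R]_n), psdmx Z ->
  (forall i j : 'I_n, (i < n - m)%N -> Z i j = 0) -> 0 <= tip P Z.
Proof.
move=> hP; elim=> [|m IH] Z hZ hz.
  have -> : Z = 0 by apply/matrixP => i j; rewrite mxE hz // subn0.
  by rewrite tipC tip0l.
have [mn|mn] := leqP n m.
  apply: IH => // i j; have -> : (n - m = 0)%N by apply/eqP; rewrite subn_eq0.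
  by rewrite ltn0.
have pn : (n - m.+1 < n)%N by rewrite ltn_subrL /=; exact: leq_ltn_trans (leq0n m) mn.
pose p := Ordinal pn.
pose ep : 'cV[R]_n := delta_mx p 0.
pose z := Z p p.
have z0 : 0 <= z by rewrite /z -bl_delta; case: hZ => _ h; exact: h.
have hlt : forall i : 'I_n, (i < n - m)%N -> (i < n - m.+1)%N \/ i = p.
  move=> i hi; have [h|h] := ltnP i (n - m.+1); first by left.
  right; apply: val_inj => /=; apply/eqP; rewrite eqn_leq h andbT.
  by rewrite -ltnS -subSn.
have [zz|zn] := eqVneq z 0.
  apply: IH => // i j /hlt [/hz //|->].
  have := bl_cs ep (delta_mx j 0) hZ.
  rewrite !bl_delta -/z zz mul0r => h.
  by apply/eqP; rewrite -sqrf_eq0 eq_le h sqr_ge0.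
have zp : 0 < z by rewrite lt_def zn.
pose u : 'cV[R]_n := Z *m ep.
pose Z' := Z + (- z^-1) *: (u *m u^T).
have hu : forall i, u i 0 = Z i p.
  by move=> i; rewrite /u -colE mxE.
have hZs : symmx Z by case: hZ.
have eZ : Z = Z' + z^-1 *: (u *m u^T).
  by rewrite /Z' -addrA -scalerDl addNr scale0r addr0.
rewrite eZ tipDr tipZr tip_rank1.
apply: addr_ge0; last by apply: mulr_ge0; [rewrite invr_ge0 ltW|case: hP => _ h; exact: h].
apply: IH.
- split.
    rewrite /Z' /symmx raddfD /= linearZ /= trmx_mul trmxK.
    by rewrite hZs.
  move=> v; rewrite -/(bl Z' v v) blMD blMZ bl_rank1.
  have e1 : (v^T *m u) 0 0 = bl Z v ep by rewrite /bl /u mulmxA.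
  have e2 : (u^T *m v) 0 0 = bl Z ep v.
    by rewrite /u trmx_mul hZs /bl.
  rewrite e1 e2 (bl_sym v ep hZs).
  have := bl_cs ep v hZ; rewrite bl_delta -/z => hcs.
  have hvv : 0 <= bl Z v v by case: hZ => _ h; exact: h.
  by rewrite mulNr mulrA subr_ge0 -mulrA -expr2 ler_pdivrMl.
- have huu : forall i j, (u *m u^T) i j = Z i p * Z j p.
    by move=> i j; rewrite mxE big_ord1 [u^T _ _]mxE !hu.
  have hZ' : forall i j, Z' i j = Z i j - z^-1 * (Z i p * Z j p).
    by move=> i j; rewrite /Z' !mxE big_ord1 [u^T _ _]mxE !hu mulNr.
  move=> i j /hlt [hi|->].
    rewrite hZ' hz // hz //; ring.
  rewrite hZ' -/z (symmx_entry _ _ hZs).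
  by field.
Qed.

Lemma psd_tip n (P Z : 'M[R]_n) : psdmx P -> psdmx Z -> 0 <= tip P Z.
Proof.
move=> hP hZ; apply: (psd_tip_gen hP (m:=n)) => // i j; by rewrite subnn ltn0.
Qed.
End Aux4.



Section Aux5.
Variable R : rcfType.

Lemma pd_unit n (M : 'M[R]_n) : pdmx M -> M \in unitmx.
Proof.
case=> hs hp; rewrite unitmxE unitfE; apply/negP; move=> /det0P [v vn vM].
have : v^T != 0 by rewrite trmx_eq0.
by move=> /hp; rewrite trmxK vM mul0mx mxE ltxx.
Qed.

Lemma entry_delta n (v : 'cV[R]_n) (j : 'I_n) : ((delta_mx j 0 : 'cV[R]_n)^T *m v) 0 0 = v j 0.
Proof. by rewrite trmx_delta -rowE mxE. Qed.

Lemma sq_le_sum n (v : 'cV[R]_n) j : v j 0 ^+ 2 <= \sum_k v k 0 ^+ 2.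
Proof.
rewrite (bigD1 j) //= lerDl; apply: sumr_ge0 => k _; exact: sqr_ge0.
Qed.

Lemma pd_perturb n (M B : 'M[R]_n) : pdmx M -> symmx B ->
  exists2 s, 0 < s & forall t, `|t| <= s -> psdmx (M + t *: B).
Proof.
move=> hM hB; have hMu := pd_unit hM.
have [hMs hMp] := hM.
have hMpsd : psdmx M.
  split=> // v; have [->|vn] := eqVneq v 0; first by rewrite mulmx0 mxE.
  exact/ltW/hMp.
pose uj (j : 'I_n) : 'cV[R]_n := invmx M *m delta_mx j 0.
pose T := \sum_j bl M (uj j) (uj j).
have T0 : 0 <= T by apply: sumr_ge0 => j _; case: hMpsd => _ h; exact: h.
have hS : forall v : 'cV[R]_n, \sum_k v k 0 ^+ 2 <= T * bl M v v.
  move=> v; rewrite /T mulr_suml; apply: ler_sum => j _.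
  have -> : v j 0 = bl M (uj j) v.
    rewrite /bl /uj trmx_mul trmx_inv hMs -(mulmxA _ (invmx M)) mulVmx //.
    by rewrite mulmx1 entry_delta.
  exact: bl_cs.
pose K := \sum_i \sum_j `|B i j|.
have K0 : 0 <= K by apply: sumr_ge0 => i _; apply: sumr_ge0 => j _.
have hK : forall v : 'cV[R]_n, `|bl B v v| <= 2 * K * \sum_k v k 0 ^+ 2.
  move=> v; rewrite bl_expand.
  apply: (le_trans (ler_norm_sum _ _ _)).
  rewrite [2 * K]mulrC -mulrA /K mulr_suml; apply: ler_sum => i _.
  apply: (le_trans (ler_norm_sum _ _ _)).
  rewrite mulr_suml; apply: ler_sum => j _.
  have h1 := sq_le_sum v i; have h2 := sq_le_sum v j.
  set S := \sum_k _ in h1 h2 *.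
  rewrite !normrM.
  have hab : `|v i 0| * `|v j 0| <= v i 0 ^+ 2 + v j 0 ^+ 2.
    have ea : `|v i 0| ^+ 2 = v i 0 ^+ 2 by rewrite real_normK ?num_real.
    have eb : `|v j 0| ^+ 2 = v j 0 ^+ 2 by rewrite real_normK ?num_real.
    have := sqr_ge0 (`|v i 0| - `|v j 0|).
    have := normr_ge0 (v i 0); have := normr_ge0 (v j 0).
    rewrite -ea -eb; nra.
  have hBij : 0 <= `|B i j| by [].
  nra.
exists (1 / (1 + 2 * K * T)).
  by rewrite divr_gt0 // ltr_wpDr // mulr_ge0 // mulr_ge0.
move=> t ht; split.
  by rewrite /symmx raddfD /= linearZ /= hMs hB.
move=> v; rewrite -/(bl (M + t *: B) v v) blMD blMZ.
have q0 : 0 <= bl M v v by case: hMpsd => _ h; exact: h.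
have := hS v; have := hK v.
set S := \sum_k _; set q := bl M v v; set bb := bl B v v => hKv hSv.
have S0 : 0 <= S by apply: sumr_ge0 => k _; exact: sqr_ge0.
have d0 : 0 < 1 + 2 * K * T by rewrite ltr_wpDr // mulr_ge0 // mulr_ge0.
have ht' : `|t| * (1 + 2 * K * T) <= 1.
  by rewrite -ler_pdivlMr // div1r -[X in _ <= X]div1r.
have tb : - (`|t| * (2 * K * S)) <= t * bb.
  rewrite lerNl -mulrN; apply: (le_trans (ler_norm _)).
  by rewrite normrM normrN; apply: ler_wpM2l.
have hh : `|t| * (2 * K * S) <= `|t| * (2 * K * T * q).
  apply: ler_wpM2l => //; rewrite -!mulrA; apply: ler_wpM2l => //.
  by apply: ler_wpM2l.
have ta : 0 <= `|t| by [].
have hp : 0 <= q * (1 - `|t| * (1 + 2 * K * T)) by apply: mulr_ge0; rewrite // subr_ge0.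
have hp2 : 0 <= q * `|t| by apply: mulr_ge0.
nra.
Qed.
End Aux5.



Section Aux6.
Variable R : rcfType.

Lemma tipNr n (P Z : 'M[R]_n) : tip Z (- P) = - tip Z P.
Proof. by rewrite -scaleN1r tipZr mulN1r. Qed.

Lemma tipQY N (A : 'M[R]_N) b c x X :
  tip (Qmx A b c) (Ymx x X) = qf A b c x + tip A (X - x *m x^T).
Proof.
rewrite tipDr tipNr tip_rank1 /qf /tip /Qmx /Ymx big_split_ord.
under eq_bigr do rewrite big_split_ord.
under [X in _ + X = _]eq_bigr do rewrite big_split_ord.
rewrite !big_ord1 !block_mxEul.
under eq_bigr do rewrite block_mxEur block_mxEur.
under [X in _ + X = _]eq_bigr do rewrite big_ord1 !block_mxEdl.
under [X in _ + X = _]eq_bigr do (under eq_bigr do rewrite !block_mxEdr).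
rewrite big_split /= -/(tip A X) /tip.
rewrite -/(bl A x x) !mxE mulr1 /=.
under eq_bigr do rewrite !mxE.
under [X in _ = _ + 2 * X + _ + _]eq_bigr do rewrite !mxE.
ring.
Qed.
End Aux6.

Section Aux7.
Variable R : rcfType.
Lemma schur_psd N (x : 'cV[R]_N) X : symmx X -> psdmx (Ymx x X) ->
  psdmx (X - x *m x^T).
Proof.
move=> hX hY; split.
  by rewrite /symmx raddfB /= trmx_mul trmxK hX.
move=> v; rewrite -/(bl (X - x *m x^T) v v) -scaleN1r blMD blMZ bl_rank1.
pose e : 'cV[R]_(1 + N) := col_mx 1%:M 0.
pose f : 'cV[R]_(1 + N) := col_mx 0 v.
have := bl_cs e f hY.
have -> : bl (Ymx x X) e e = 1.
  rewrite /bl /Ymx /e tr_col_mx mul_row_block mul_row_col.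
  by rewrite !trmx0 !mul0mx !addr0 trmx1 !mulmx1 mulmx0 addr0 mxE.
have -> : bl (Ymx x X) f f = bl X v v.
  rewrite /bl /Ymx /f tr_col_mx mul_row_block mul_row_col.
  by rewrite !trmx0 !mul0mx !add0r mulmx0 add0r.
have -> : bl (Ymx x X) e f = (x^T *m v) 0 0.
  rewrite /bl /Ymx /e /f tr_col_mx mul_row_block mul_row_col.
  by rewrite !trmx0 !mul0mx !addr0 trmx1 !mul1mx ?mulmx0 ?add0r.
have -> : (v^T *m x) 0 0 = (x^T *m v) 0 0.
  by rewrite -[in LHS](trmxK (v^T *m x)) mxE trmx_mul trmxK.
rewrite mul1r; lra.
Qed.
End Aux7.

Unset Implicit Arguments. Set Strict Implicit.

Theorem mainTheorem3 (R : rcfType) (N mI mE : nat)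
  (A0 : 'M[R]_N) (b0 : 'cV[R]_N) (c0 : R)
  (A : 'I_(mI + mE) -> 'M[R]_N) (b : 'I_(mI + mE) -> 'cV[R]_N)
  (c : 'I_(mI + mE) -> R)
  (hN : (1 <= N)%N) (hm : (1 <= mI + mE)%N)
  (hA0 : symmx A0) (hA : forall i, symmx (A i))
  (hAssA : assumptionA A0 A b c)
  (hAssB : assumptionB A0 b0 c0 A b c)
  (xh : 'cV[R]_N) (th : R)
  (hSDP : inDSDP A0 b0 c0 A b c xh th)
  (hdef : definite_F A0 b0 c0 A b c xh) :
  inD A0 b0 c0 A b c xh th.
Proof.
case: hdef => g [[hG hmax] hpd].
case: hSDP => X [hXs [hY [hobj hcons]]].
set qi := fun i => qf (A i) (b i) (c i) xh.
have hq : qgam A0 b0 c0 A b c g xh <= 2 * th.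
  have hZ := schur_psd hXs hY.
  have ht : tip (Qmx A0 b0 c0) (Ymx xh X) +
      \sum_i g i * tip (Qmx (A i) (b i) (c i)) (Ymx xh X) <= 2 * th.
    rewrite -[X in _ <= X]addr0; apply: lerD => //.
    apply: sumr_le0 => i _; have := hcons i; case: ifP => hi.
      by move=> h; apply: mulr_ge0_le0 => //; apply: (proj2 hG).
    by move/eqP => ->; rewrite mulr0.
  apply: le_trans ht.
  rewrite tipQY.
  under eq_bigr do rewrite tipQY mulrDr.
  rewrite big_split /= /qgam.
  have : 0 <= tip (Agam A0 A g) (X - xh *m xh^T) by apply: psd_tip => //; case: hG.
  rewrite /Agam tipDl tip_suml.
  rewrite (eq_bigr (fun i => g i * tip (A i) (X - xh *m xh^T))); last by move=> i _; rewrite tipZl.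
  lra.
have hpert : forall i : 'I_(mI + mE), exists2 s, 0 < s & forall t, `|t| <= s ->
    ((i < mI)%N -> 0 <= g i + t) -> t * qi i <= 0.
  move=> i; have [s s0 hs] := pd_perturb hpd (hA i).
  exists s => // t ht hnn.
  pose g' := fun k => g k + (if k == i then t else 0).
  have eA : Agam A0 A g' = Agam A0 A g + t *: A i.
    rewrite /Agam /g'.
    under eq_bigr do rewrite scalerDl.
    rewrite big_split /= [in LHS]addrA; congr (_ + _).
    rewrite (bigD1 i) //= eqxx big1 ?addr0 // => k /negPf ->; by rewrite scale0r.
  have eq : qgam A0 b0 c0 A b c g' xh = qgam A0 b0 c0 A b c g xh + t * qi i.
    rewrite /qgam /g'.
    under eq_bigr do rewrite mulrDl.
    rewrite big_split /= [in LHS]addrA; congr (_ + _).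
    rewrite (bigD1 i) //= eqxx big1 ?addr0 // => k /negPf ->; by rewrite mul0r.
  have hg' : inGamma A0 A g'.
    split; first by rewrite eA; exact: hs.
    move=> k hk; rewrite /g'; case: eqP hk => [->|_] hk; first exact: hnn.
    by rewrite addr0; apply: (proj2 hG).
  have := hmax _ hg'; rewrite eq; lra.
have hle : forall i : 'I_(mI + mE), qi i <= 0.
  move=> i; have [s s0 hs] := hpert i.
  have := hs s; rewrite gtr0_norm // lexx => /(_ isT) h.
  have : s * qi i <= 0 by apply: h => hi; apply: addr_ge0 => //; [apply: (proj2 hG) | exact: ltW].
  by rewrite pmulr_rle0.
have hge : forall i : 'I_(mI + mE), (~~ (i < mI)%N \/ 0 < g i) -> 0 <= qi i.
  move=> i hi; have [s s0 hs] := hpert i.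
  pose t := - Num.min s (if (i < mI)%N then g i else s).
  have tn : 0 < - t.
    rewrite /t opprK lt_min s0 /=; case: ifP => // hm'.
    by case: hi => [/negP|//].
  have hts : - t <= s by rewrite /t opprK ge_min lexx.
  have := hs t; rewrite -normrN ger0_norm; last exact: ltW.
  move=> /(_ hts) h.
  have : t * qi i <= 0.
    apply: h => hi'; rewrite /t hi'.
    by rewrite subr_ge0 ge_min lexx orbT.
  move=> htq; have : (- t) * qi i >= 0 by rewrite mulNr oppr_ge0.
  by rewrite pmulr_rge0.
have hz : forall i : 'I_(mI + mE), g i * qi i = 0.
  move=> i; case: (boolP (i < mI)%N) => hi.
    have [gz|gp] := eqVneq (g i) 0; first by rewrite gz mul0r.
    have gp' : 0 < g i by rewrite lt_def gp (proj2 hG).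
    have := hle i; have := hge i (or_intror gp'); move=> h1 h2.
    have -> : qi i = 0 by apply/eqP; rewrite eq_le h1 h2.
    by rewrite mulr0.
  have := hle i; have := hge i (or_introl hi); move=> h1 h2.
  have -> : qi i = 0 by apply/eqP; rewrite eq_le h1 h2.
  by rewrite mulr0.
split.
  move: hq; rewrite /qgam big1 ?addr0 //.
move=> i; case: ifP => hi; first exact: hle.
have := hle i; have := hge i (or_introl (negbT hi)); move=> h1 h2.
by rewrite eq_le h1 h2.
Qed.
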